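(* Let $(X,s)$ be a complete strong partial metric space, let $x_o\in X$, and let $f:X\to X$ be a Cauchy function at $x_o$. If $f$ is non-expansive, then $f$ has a fixed point.
   Context: A strong partial metric on $X$ is $s:X\times X\to\mathbb{R}$ with, for all $x,y,z$: $s(x,x)<s(x,y)$ whenever $x\neq y$; $s(x,y)=s(y,x)$; $s(x,y)\le s(x,z)+s(z,y)-s(z,z)$. A point $a$ is a limit of $\{x_i\}$ iff for every $\epsilon>0$ there is $N$ with $s(a,x_i)-s(a,a)<\epsilon$ for all $i>N$ (convergence in the topology generated by the balls $\{y\mid s(x,y)-s(x,x)<\epsilon\}$). $\{x_i\}$ is Cauchy with central distance $r$ if for every $\epsilon>0$ there is $N$ with $|s(x_i,x_j)-r|<\epsilon$ for $i\ge j>N$; a special limit is a limit $a$ with $s(a,a)=r$; $(X,s)$ is complete if every Cauchy sequence has a special limit. $f$ is a Cauchy function at $x_o$ if the orbit $\{f^i(x_o)\}$ ($f^0(x_o)=x_o$, $f^{i+1}(x_o)=f(f^i(x_o))$) is Cauchy. $f$ is non-expansive if $s(f(x),f(y))\le s(x,y)$ for all $x,y$. *)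

(* Defs.v *)
From Stdlib Require Import Reals.
Open Scope R_scope.

Definition strong_partial_metric {X : Type} (s : X -> X -> R) : Prop :=
  (forall x y : X, x <> y -> s x x < s x y) /\
  (forall x y : X, s x y = s y x) /\
  (forall x y z : X, s x y <= s x z + s z y - s z z).

Definition is_limit {X : Type} (s : X -> X -> R) (u : nat -> X) (a : X) : Prop :=
  forall eps : R, eps > 0 ->
    exists N : nat, forall i : nat, (i > N)%nat -> s a (u i) - s a a < eps.

Definition cauchy_with {X : Type} (s : X -> X -> R) (u : nat -> X) (r : R) : Prop :=
  forall eps : R, eps > 0 ->
    exists N : nat, forall i j : nat, (i >= j)%nat -> (j > N)%nat ->
      Rabs (s (u i) (u j) - r) < eps.

Definition is_cauchy {X : Type} (s : X -> X -> R) (u : nat -> X) : Prop :=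
  exists r : R, cauchy_with s u r.

Definition complete_spm {X : Type} (s : X -> X -> R) : Prop :=
  forall (u : nat -> X) (r : R), cauchy_with s u r ->
    exists a : X, is_limit s u a /\ s a a = r.

Definition orbit {X : Type} (f : X -> X) (x0 : X) : nat -> X :=
  fun i => Nat.iter i f x0.

Definition cauchy_function_at {X : Type} (s : X -> X -> R) (f : X -> X) (x0 : X) : Prop :=
  is_cauchy s (orbit f x0).

Definition non_expansive {X : Type} (s : X -> X -> R) (f : X -> X) : Prop :=
  forall x y : X, s (f x) (f y) <= s x y.

(* Main.v *)
Require Import Defs.
From Stdlib Require Import Reals Lra Lia Classical.
Open Scope R_scope.

Theorem theorem7p12 (X : Type) (s : X -> X -> R) (x0 : X) (f : X -> X) :
  strong_partial_metric s -> complete_spm s ->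
  cauchy_function_at s f x0 -> non_expansive s f ->
  exists x : X, f x = x.
Proof.
  intros [Hlt [Hsym Htri]] Hcomp [r Hc] Hne.
  destruct (Hcomp _ _ Hc) as [a [Hlim Har]].
  exists a.
  assert (Hb : forall eps, eps > 0 -> s a (f a) < r + 3 * eps).
  { intros eps He.
    destruct (Hlim eps He) as [N1 HN1].
    destruct (Hc eps He) as [N2 HN2].
    set (i := S (Nat.max N1 N2)).
    assert (H1 := HN1 i ltac:(unfold i; lia)).
    assert (H2 := HN1 (S i) ltac:(unfold i; lia)).
    assert (H3 := HN2 (S i) (S i) ltac:(lia) ltac:(unfold i; lia)).
    assert (H4 := Htri a (f a) (orbit f x0 (S i))).
    assert (H5 : s (orbit f x0 (S i)) (f a) <= s (orbit f x0 i) a).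
    { change (orbit f x0 (S i)) with (f (orbit f x0 i)). apply Hne. }
    rewrite (Hsym (orbit f x0 i) a) in H5.
    apply Rabs_def2 in H3. lra. }
  destruct (classic (f a = a)) as [E|E]; auto.
  exfalso.
  assert (Hs := Hlt a (f a) (not_eq_sym E)).
  assert (Hx := Hb ((s a (f a) - r) / 6) ltac:(lra)). lra.
Qed.
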